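(* Consider the discretized protocol with respect to $G$ with parameter $\epsilon>0$ on an information structure, and suppose turn $t+1$ is Alice's. Fix a realized rectangle $S_t\times T_t$ with $\mathbb P(\sigma\in S_t,\tau\in T_t)>0$, and let ''hi'' be the event that Alice says ''high'' at turn $t+1$. Let $\alpha:=\mathbb E[D_G(\mu_{\sigma T_t}\parallel\mu_{S_tT_t})\mathbf 1_{\mathrm{hi}}\mid S_t,T_t]$. Then $\mathbb E[D_G(\mu_{S_{t+1}T_{t+1}}\parallel\mu_{S_tT_t})\mathbf 1_{\mathrm{hi}}\mid S_t,T_t]\ge\frac{\alpha\epsilon}{8M+2\epsilon}$. The analogous statement holds with ''low'' in place of ''high'', and likewise when turn $t+1$ is Bob's (with $\mu_{S_t\tau}$ in place of $\mu_{\sigma T_t}$).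
   Context: $G:[0,1]\to\mathbb R$ strictly convex, differentiable on $(0,1)$, $M:=\sup G-\inf G<\infty$; $D_G(y\parallel x)=G(y)-G(x)-(y-x)G'(x)$. An information structure is a tuple $(\Omega,\mathbb P,\mathcal S,\mathcal T,Y)$: a probability space, random variables $\sigma:\Omega\to\mathcal S$ (Alice's signal), $\tau:\Omega\to\mathcal T$ (Bob's signal), $Y:\Omega\to[0,1]$. For measurable $S,T$: $\mu_{\sigma T}=\mathbb E[Y\mid\sigma,\tau\in T]$, $\mu_{S\tau}=\mathbb E[Y\mid\sigma\in S,\tau]$, $\mu_{ST}=\mathbb E[Y\mid\sigma\in S,\tau\in T]$; $\mathbb E[\cdot\mid S,T]$ conditions on $\{\sigma\in S,\tau\in T\}$. In a communication protocol, after $t$ messages the set of signal pairs consistent with the transcript is a rectangle $S_t\times T_t$ ($S_0=\mathcal S$, $T_0=\mathcal T$). Discretized protocol w.r.t. $G$ with parameter $\epsilon$: Alice speaks at odd times, Bob at even times. On Alice's turn $t$, she sends ''medium'' if $D_G(\mu_{\sigma T_{t-1}}\parallel\mu_{S_{t-1}T_{t-1}})<\epsilon/2$; otherwise ''high'' if $\mu_{\sigma T_{t-1}}>\mu_{S_{t-1}T_{t-1}}$ and ''low'' if $\mu_{\sigma T_{t-1}}<\mu_{S_{t-1}T_{t-1}}$. Bob acts analogously with $\mu_{S_{t-1}\tau}$. *)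

(* Defs.v *)
From HB Require Import structures.
From mathcomp Require Import all_boot all_order all_algebra.
From mathcomp Require Import all_classical all_reals all_analysis.
Set Implicit Arguments.
Unset Strict Implicit.
Unset Printing Implicit Defensive.
Import Order.TTheory GRing.Theory Num.Theory.
Import numFieldNormedType.Exports.
Local Open Scope classical_set_scope.
Local Open Scope ring_scope.

Section Defs.
Context {R : realType}.

Definition strictly_convex01 (G : R -> R) : Prop :=
  forall x y t : R, 0 <= x <= 1 -> 0 <= y <= 1 -> x != y -> 0 < t < 1 ->
    G (t * x + (1 - t) * y) < t * G x + (1 - t) * G y.

Definition differentiable01 (G : R -> R) : Prop :=
  forall x : R, 0 < x < 1 -> derivable G x 1.

(* sup G - inf G < oo on [0,1], i.e. G bounded on [0,1] *)
Definition bounded01 (G : R -> R) : Prop :=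
  exists C : R, forall x : R, 0 <= x <= 1 -> `|G x| <= C.

Definition Mrange (G : R -> R) : R :=
  sup [set G x | x in [set x : R | 0 <= x <= 1]]
  - inf [set G x | x in [set x : R | 0 <= x <= 1]].

Definition DG (G : R -> R) (y x : R) : R := G y - G x - (y - x) * derive1 G x.

Definition condE_on d (Omega : measurableType d) (P : probability Omega R)
  (E : set Omega) (X : Omega -> R) : R :=
  fine (\int[P]_(w in E) (X w)%:E)%E / fine (P E).

(* f is a ([0,1]-valued) version of E[Y | own, other \in B], i.e.
   f o own = E[Y | own, other \in B] on the event {other \in B}. *)
Definition cond_version d d1 d2 (Omega : measurableType d)
  (P : probability Omega R) (S1 : measurableType d1) (S2 : measurableType d2)
  (own : Omega -> S1) (other : Omega -> S2) (B : set S2) (Y : Omega -> R)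
  (f : S1 -> R) : Prop :=
  measurable_fun setT f /\ (forall s, 0 <= f s <= 1) /\
  forall A : set S1, measurable A ->
    (\int[P]_(w in own @^-1` A `&` other @^-1` B) (Y w)%:E =
     \int[P]_(w in own @^-1` A `&` other @^-1` B) (f (own w))%:E)%E.

(* The signals in A whose holder sends the message "high" (up = true) or
   "low" (up = false), given their posterior f and the current mean mu0. *)
Definition msg_set (S1 : Type) (G : R -> R) (eps : R) (up : bool)
  (A : set S1) (mu0 : R) (f : S1 -> R) : set S1 :=
  [set s | A s /\ eps / 2 <= DG G (f s) mu0 /\
           (if up then mu0 < f s else f s < mu0)].

End Defs.

(* Main.v *)
Require Import Defs.
From HB Require Import structures.
From mathcomp Require Import all_boot all_order all_algebra.
From mathcomp Require Import all_classical all_reals all_analysis.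
From mathcomp Require Import ring lra measurable_realfun.
Import Order.TTheory GRing.Theory Num.Theory.
Import numFieldNormedType.Exports.
Local Open Scope classical_set_scope.
Local Open Scope ring_scope.

Section Convex.
Context {R : realType} (G : R -> R).
Hypothesis cG : strictly_convex01 G.
Hypothesis dG : differentiable01 G.

Lemma convW x y t : 0 <= x <= 1 -> 0 <= y <= 1 -> 0 <= t <= 1 ->
  G (t * x + (1 - t) * y) <= t * G x + (1 - t) * G y.
Proof.
move=> x01 y01 /andP[t0 t1].
have [->|xy] := eqVneq x y.
  by rewrite -mulrDl subrKC !mul1r -mulrDl subrKC mul1r.
have [->|t0'] := eqVneq t 0; first by rewrite !mul0r !subr0 !mul1r !add0r.
have [->|t1'] := eqVneq t 1; first by rewrite !subrr !mul0r !mul1r !addr0.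
apply/ltW/cG => //; rewrite lt_neqAle eq_sym t0' t0 /= lt_neqAle t1' t1.
by [].
Qed.

Lemma tangent x z : 0 < x < 1 -> 0 <= z <= 1 ->
  G x + (z - x) * derive1 G x <= G z.
Proof.
move=> x01 z01.
have hx : derivable G x 1 := @dG x x01.
set q := fun h : R => h^-1 * (G (h + x) - G x).
have qc : q h @[h --> 0^'] --> derive1 G x.
  have -> : derive1 G x = lim (q h @[h --> 0^']) by [].
  move: hx; rewrite /derivable.
  suff -> : (fun h : R => h^-1 *: ((G \o shift x) (h *: 1) - G x)) = q by [].
  by apply/funext => h /=; rewrite /q /shift /= [h *: 1]mulr1.
have x01' : 0 <= x <= 1 by case/andP: x01 => /ltW -> /ltW ->.
have [zx|zx|->] := ltgtP z x; last by rewrite subrr mul0r addr0.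
- set c := (G z - G x) / (z - x).
  have zx0 : z - x < 0 by rewrite subr_lt0.
  have : c <= derive1 G x.
    have qc' := cvg_dnbhs_at_left qc.
    rewrite -(cvg_lim _ qc'); last exact: Rhausdorff.
    apply: limr_ge; first by apply/cvg_ex; exists (derive1 G x).
    near=> h.
    have h0 : h < 0 by near: h; exact: nbhs_left_lt.
    have vh : z - x < h by near: h; exact: nbhs_left_gt.
    set t := h / (z - x).
    have t0 : 0 <= t <= 1.
      rewrite /t; apply/andP; split; first by rewrite ler_ndivlMr // mul0r ltW.
      by rewrite ler_ndivrMr // mul1r ltW.
    have := @convW z x t z01 x01' t0.
    have -> : t * z + (1 - t) * x = h + x.
      by rewrite /t; field; rewrite lt_eqF.
    move=> Hc.
    have e1 : G (h + x) - G x <= h * c.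
      rewrite /c /t in Hc *.
      have -> : h * ((G z - G x) / (z - x)) = h / (z - x) * G z + (1 - h / (z - x)) * G x - G x.
        by field; rewrite lt_eqF.
      by rewrite lerD2r.
    rewrite /q.
    have : 0 <= h^-1 * (G (h + x) - G x - h * c).
      by apply: mulr_le0 ; [rewrite invr_le0 ltW | rewrite subr_le0].
    by rewrite mulrBr mulrA mulVf ?lt_eqF // mul1r subr_ge0.
  move=> cl.
  have : (z - x) * derive1 G x <= (z - x) * c by rewrite ler_wnM2l // ltW.
  have -> : (z - x) * c = G z - G x by rewrite /c; field; rewrite lt_eqF.
  move=> H; lra.
- set c := (G z - G x) / (z - x).
  have zx0 : 0 < z - x by rewrite subr_gt0.
  have : derive1 G x <= c.
    have qc' := cvg_dnbhs_at_right qc.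
    rewrite -(cvg_lim _ qc'); last exact: Rhausdorff.
    apply: limr_le; first by apply/cvg_ex; exists (derive1 G x).
    near=> h.
    have h0 : 0 < h by near: h; exact: nbhs_right_gt.
    have vh : h < z - x by near: h; exact: nbhs_right_lt.
    set t := h / (z - x).
    have t0 : 0 <= t <= 1.
      rewrite /t; apply/andP; split; first by rewrite divr_ge0 // ltW.
      by rewrite ler_pdivrMr // mul1r ltW.
    have := @convW z x t z01 x01' t0.
    have -> : t * z + (1 - t) * x = h + x.
      by rewrite /t; field; rewrite gt_eqF.
    move=> Hc.
    have e1 : G (h + x) - G x <= h * c.
      rewrite /c /t in Hc *.
      have -> : h * ((G z - G x) / (z - x)) = h / (z - x) * G z + (1 - h / (z - x)) * G x - G x.
        by field; rewrite gt_eqF.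
      by rewrite lerD2r.
    rewrite /q ler_pdivrMl //.
  move=> cl.
  have : (z - x) * derive1 G x <= (z - x) * c by rewrite ler_wpM2l // ltW.
  have -> : (z - x) * c = G z - G x by rewrite /c; field; rewrite gt_eqF.
  move=> H; lra.
Unshelve. all: by end_near.
Qed.

Lemma DG_ge0 x y : 0 < x < 1 -> 0 <= y <= 1 -> 0 <= DG G y x.
Proof.
move=> x01 y01; have := @tangent x y x01 y01; rewrite /DG => H; lra.
Qed.

Lemma DG_mono x y z : 0 < x < 1 -> 0 <= y <= 1 ->
  (x <= z <= y) || (y <= z <= x) -> DG G z x <= DG G y x.
Proof.
move=> x01 y01 hz.
have x01' : 0 <= x <= 1 by case/andP: x01 => /ltW -> /ltW ->.
have [yx|yx] := eqVneq y x.
  have -> : z = x.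
    by move: hz; rewrite yx => /orP[] /andP[a b]; apply/eqP; rewrite eq_le a b.
  by rewrite /DG subrr !subrr mul0r subr0; exact: (@DG_ge0 x y).
set t := (z - x) / (y - x).
have t01 : 0 <= t <= 1.
  case/orP: hz => /andP[a b].
    have yx' : 0 < y - x by rewrite subr_gt0 lt_neqAle eq_sym yx (le_trans a b).
    apply/andP; split.
      by apply: divr_ge0; [rewrite subr_ge0 | exact: ltW].
    by rewrite /t ler_pdivrMr // mul1r lerB.
  have yx' : y - x < 0 by rewrite subr_lt0 lt_neqAle yx (le_trans a b).
  apply/andP; split; first by rewrite /t ler_ndivlMr // mul0r subr_le0 b.
  by rewrite /t ler_ndivrMr // mul1r lerB.
have ez : z = t * y + (1 - t) * x by rewrite /t; field; rewrite subr_eq0.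
have := @convW y x t y01 x01' t01; rewrite -ez => Hc.
have Dy := @DG_ge0 x y x01 y01.
have e : z - x = t * (y - x) by rewrite /t; field; rewrite subr_eq0.
move: Dy Hc t01; rewrite /DG e => Dy Hc /andP[t0 t1].
have : t * (G y - G x - (y - x) * derive1 G x) <= G y - G x - (y - x) * derive1 G x.
  by rewrite ler_piMl.
move=> H; nra.
Qed.

Lemma contG : {in `]0, 1[, continuous G}.
Proof.
move=> x; rewrite inE /= => x01.
apply: differentiable_continuous; rewrite -derivable1_diffP; exact: dG.
Qed.

Lemma measG : measurable_fun `[(0:R), (1:R)] G.
Proof.
have -> : [set` `[(0:R), (1:R)]] = [set` `](0:R), (1:R)[] `|` ([set (0:R)] `|` [set (1:R)]) :> set R.
  apply/seteqP; split => y /=; rewrite !in_itv /=.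
    move=> /andP[a b]; rewrite !le_eqVlt in a b.
    case/orP: a => [/eqP <-|a]; first by right; left.
    case/orP: b => [/eqP ->|b]; first by right; right.
    by left; rewrite a b.
  by case=> [/andP[a b]|[->|->]]; rewrite ?lexx ?ler01 // ltW // ltW.
apply/measurable_funU => //.
  apply: measurableU; exact: measurable_set1.
split.
  apply: measurable_realfun.open_continuous_measurable_fun.
    exact: interval_open.
  by move=> y hy; apply: contG; move: hy; rewrite !inE.
apply/measurable_funU => //; split; exact: measurable_fun_set1.
Qed.

Lemma measGf (d' : measure_display) (T : measurableType d') (f : T -> R) :
  measurable_fun setT f -> (forall s, 0 <= f s <= 1) -> measurable_fun setT (G \o f).
Proof.
move=> mf f01; apply: (measurable_comp (F := `[(0:R), (1:R)])) => //.
- by move=> _ [s _ <-]; rewrite /= in_itv /= f01.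
- exact: measG.
Qed.

End Convex.

Lemma M_bound {R : realType} (G : R -> R) a b : bounded01 G ->
  0 <= a <= 1 -> 0 <= b <= 1 -> G a - G b <= Mrange G.
Proof.
move=> [C HC] a01 b01.
set S := [set G x | x in [set x : R | 0 <= x <= 1]].
have hs : has_sup S.
  split; first by exists (G a), a.
  by exists C => _ [x x01 <-]; have := HC x x01; rewrite ler_norml => /andP[].
have hi : has_inf S.
  split; first by exists (G a), a.
  by exists (- C) => _ [x x01 <-]; have := HC x x01; rewrite ler_norml => /andP[].
have h1 : G a <= sup S by apply: sup_upper_bound => //; exists a.
have h2 : inf S <= G b by apply: ge_inf; [case: hi | exists b].
rewrite /Mrange -/S; lra.
Qed.

Section Meas.
Context {R : realType} (d : measure_display) (Omega : measurableType d)
  (P : probability Omega R).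

Lemma finP (A : set Omega) : measurable A -> P A \is a fin_num.
Proof.
move=> mA; rewrite ge0_fin_numE ?measure_ge0 //.
exact: le_lt_trans (probability_le1 P mA) (ltry 1).
Qed.

Lemma intb (D : set Omega) (f : Omega -> R) C : measurable D ->
  measurable_fun setT f -> (forall w, `|f w| <= C) -> P.-integrable D (EFin \o f).
Proof.
move=> mD mf fb; apply: measurable_bounded_integrable => //.
- exact: le_lt_trans (probability_le1 P mD) (ltry 1).
- exact: measurable_funS mf.
- exists C; split; first by rewrite num_real.
  by move=> M CM w _ /=; exact: le_trans (fb w) (ltW CM).
Qed.

Lemma RI_ind (E H : set Omega) (g : Omega -> R) : H `<=` E ->
  Rintegral P E (fun w => g w * \1_H w) = Rintegral P H g.
Proof.
move=> HE; rewrite -{2}(setIidr HE) Rintegral_mkcondr.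
apply: eq_Rintegral => w _; rewrite patchE indicE.
by case: (w \in H); rewrite ?mulr1 ?mulr0.
Qed.

Lemma Pos0 (H : set Omega) (f : Omega -> R) : measurable H ->
  measurable_fun setT f -> (forall w, H w -> 0 < f w) ->
  (\int[P]_(x in H) (f x)%:E = 0)%E -> P H = 0.
Proof.
move=> mH mf fpos i0.
have mfH : measurable_fun (T:=Omega) (U:=\bar R) H (EFin \o f).
  by apply/measurable_EFinP; exact: measurable_funS mf.
have : (\int[P]_(x in H) `|(EFin \o f) x| = 0)%E.
  rewrite -i0; apply: eq_integral => w; rewrite inE => Hw.
  by rewrite /comp abse_EFin gtr0_norm // fpos.
move/(ae_eq_integral_abs P mH mfH) => [N [mN PN0 sub]].
apply/eqP; rewrite eq_le measure_ge0 andbT -PN0.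
apply: le_measure; rewrite ?inE //.
move=> w Hw; apply: sub => /= /(_ Hw) /eqP.
by rewrite eqe gt_eqF // fpos.
Qed.



Lemma RIc (D : set Omega) (c : R) : measurable D ->
  Rintegral P D (fun _ => c) = c * fine (P D).
Proof. by move=> mD; rewrite Rintegral_cst. Qed.

Lemma RIfc (D : set Omega) (f : Omega -> R) c : measurable D ->
  P.-integrable D (EFin \o f) ->
  Rintegral P D (fun w => f w - c) = Rintegral P D f - c * fine (P D).
Proof.
move=> mD fi; rewrite RintegralB //.
- by congr (_ - _); exact: RIc.
- by apply: (@intb _ _ `|c|) => //; exact: measurable_cst.
Qed.

Lemma RIcf (D : set Omega) (f : Omega -> R) c : measurable D ->
  P.-integrable D (EFin \o f) ->
  Rintegral P D (fun w => c - f w) = c * fine (P D) - Rintegral P D f.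
Proof.
move=> mD fi; rewrite RintegralB //.
- by congr (_ - _); exact: RIc.
- by apply: (@intb _ _ `|c|) => //; exact: measurable_cst.
Qed.

Lemma RI_sub (E H : set Omega) (f : Omega -> R) : measurable E -> measurable H ->
  H `<=` E -> measurable_fun setT f -> (forall w, 0 <= f w <= 1) ->
  Rintegral P H f <= Rintegral P E f.
Proof.
move=> mE mH HE mf f01; rewrite -(@RI_ind E H f HE).
apply: le_Rintegral => //.
- apply: (@intb _ _ 1) => //; first by apply: measurable_funM => //; exact: measurable_indic.
  move=> w; rewrite normrM indicE; have /andP[a b] := f01 w.
  by case: (w \in H); rewrite ?normr0 ?normr1 ?mulr1 ?mulr0 ?ger0_norm.
- apply: (@intb _ _ 1) => // w; have /andP[a b] := f01 w; by rewrite ger0_norm.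
- move=> w _; rewrite indicE; have /andP[a b] := f01 w.
  by case: (w \in H); rewrite ?mulr1 ?mulr0.
Qed.

Lemma RI_01 (D : set Omega) (f : Omega -> R) : measurable D ->
  measurable_fun setT f -> (forall w, 0 <= f w <= 1) ->
  0 <= Rintegral P D f <= fine (P D).
Proof.
move=> mD mf f01.
have i1 : P.-integrable D (EFin \o f).
  apply: (@intb _ _ 1) => // w; have /andP[a b] := f01 w; by rewrite ger0_norm.
have ic c : P.-integrable D (EFin \o (fun _ : Omega => c)).
  by apply: (@intb _ _ `|c|) => //; exact: measurable_cst.
apply/andP; split.
  have := @le_Rintegral _ _ _ P D (fun _ => 0) f mD (ic 0) i1.
  rewrite Rintegral_cst // mul0r; apply => w _; by case/andP: (f01 w).
have := @le_Rintegral _ _ _ P D f (fun _ => 1) mD i1 (ic 1).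
rewrite Rintegral_cst // mul1r; apply => w _; by case/andP: (f01 w).
Qed.

Lemma core (G : R -> R) eps (E H : set Omega) (Y h : Omega -> R) (up : bool) :
 strictly_convex01 G -> differentiable01 G -> bounded01 G -> 0 < eps ->
 measurable E -> (0 < P E)%E -> measurable H -> H `<=` E ->
 measurable_fun setT Y -> (forall w, 0 <= Y w <= 1) ->
 measurable_fun setT h -> (forall w, 0 <= h w <= 1) ->
 (\int[P]_(w in H) (Y w)%:E = \int[P]_(w in H) (h w)%:E)%E ->
 (forall w, H w -> eps / 2 <= DG G (h w) (condE_on P E Y) /\
     (if up then condE_on P E Y < h w else h w < condE_on P E Y)) ->
 condE_on P E (fun w => DG G (h w) (condE_on P E Y) * \1_H w) * eps
   / (8 * Mrange G + 2 * eps)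
 <= condE_on P E (fun w => DG G (condE_on P H Y) (condE_on P E Y) * \1_H w).
Proof.
move=> cG dG bG e0 mE PE0 mH HE mY Y01 mh h01 eYh hH.
set x := condE_on P E Y.
set mu1 := condE_on P H Y.
set M := Mrange G.
have Mb a b : 0 <= a <= 1 -> 0 <= b <= 1 -> G a - G b <= M by exact: M_bound.
have M0 : 0 <= M by have := @Mb 0 0; rewrite subrr lexx ler01; apply.
set pE := fine (P E); set pH := fine (P H).
have pE0 : 0 < pE by apply: fine_gt0; rewrite PE0 /= ltey_eq finP.
have pH0 : 0 <= pH by apply: fine_ge0; exact: measure_ge0.
have bnd01 f : (forall w, 0 <= f w <= 1) -> forall w, `|f w| <= 1.
  by move=> f01 w; have /andP[a b] := f01 w; rewrite ger0_norm.
have intY D : measurable D -> P.-integrable D (EFin \o Y).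
  by move=> mD; apply: (@intb _ _ 1) => //; exact: bnd01.
have inth D : measurable D -> P.-integrable D (EFin \o h).
  by move=> mD; apply: (@intb _ _ 1) => //; exact: bnd01.
have intc D c : measurable D -> P.-integrable D (EFin \o (fun _ : Omega => c)).
  by move=> mD; apply: (@intb _ _ `|c|) => //; exact: measurable_cst.
have [CG HCG] := bG.
set Dh := fun w => DG G (h w) x.
have mDh : measurable_fun setT Dh.
  rewrite /Dh /DG; apply: measurable_funB.
    apply: measurable_funB; [exact: measGf | exact: measurable_cst].
  apply: measurable_funM; last exact: measurable_cst.
  apply: measurable_funB => //; exact: measurable_cst.
have bDh w : `|Dh w| <= CG + `|G x| + (1 + `|x|) * `|derive1 G x|.
  rewrite /Dh /DG; apply: le_trans (ler_normB _ _) _; apply: lerD.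
    apply: le_trans (ler_normB _ _) _; apply: lerD => //; exact: HCG.
  rewrite normrM ler_wpM2r //; apply: le_trans (ler_normB _ _) _.
  by rewrite lerD2r bnd01.
have intDh D : measurable D -> P.-integrable D (EFin \o Dh).
  by move=> mD; apply: intb bDh.
have e1 : fine (\int[P]_(w in E) (DG G (h w) x * \1_H w)%:E) = Rintegral P H Dh.
  exact: (@RI_ind E H Dh HE).
have e2 : fine (\int[P]_(w in E) (DG G mu1 x * \1_H w)%:E) = DG G mu1 x * pH.
  by rewrite -(Rintegral_cst P mH); exact: (@RI_ind E H (fun _ => DG G mu1 x) HE).
rewrite /condE_on e1 e2 -/pE.
set K := Rintegral P H Dh.
set Dm := DG G mu1 x.
have den0 : 0 < 8 * M + 2 * eps by lra.
suff key : K * eps <= Dm * pH * (8 * M + 2 * eps).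
  have -> : K / pE * eps / (8 * M + 2 * eps) = (K * eps / (8 * M + 2 * eps)) / pE.
    by field; rewrite !gt_eqF.
  rewrite ler_pM2r ?invr_gt0 // ler_pdivrMr //.
have [pHz|pHpos] := eqVneq pH 0.
  have PH0 : P H = 0.
    by rewrite -(fineK (finP _ mH)) -/pH pHz.
  have -> : K = 0.
    rewrite /K /Rintegral null_set_integral //.
    by apply/measurable_EFinP; exact: measurable_funS mDh.
  by rewrite pHz mulr0 !mul0r.
have pHp : 0 < pH by rewrite lt_neqAle eq_sym pHpos pH0.
have PH0 : P H != 0.
  by apply/eqP => PH; move: pHpos; rewrite /pH PH eqxx.
have kill (f : Omega -> R) (C : R) : measurable_fun setT f -> (forall w, `|f w| <= C) ->
    (forall w, H w -> 0 < f w) -> Rintegral P H f = 0 -> False.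
  move=> mf fC fpos RI0; move/eqP: PH0; apply.
  apply: (@Pos0 H f mH mf fpos).
  have fin := integrable_fin_num mH (@intb H f C mH mf fC).
  by rewrite -(fineK fin); move: RI0; rewrite /Rintegral => ->.
have RIYh : Rintegral P H Y = Rintegral P H h by rewrite /Rintegral eYh.
have /andP[EY0 EY1] := @RI_01 E Y mE mY Y01.
have /andP[HY0 HY1] := @RI_01 H Y mH mY Y01.
have Hempty : (forall w, ~ H w) -> False.
  move=> nH; move/eqP: PH0; apply.
  by have -> : H = set0 by apply/seteqP; split => w // /nH.
have x01 : 0 < x < 1.
  have xge : 0 <= x by rewrite /x /condE_on divr_ge0 // ltW.
  have xle : x <= 1 by rewrite /x /condE_on ler_pdivrMr // mul1r.
  rewrite !lt_neqAle xge xle !andbT; apply/andP; split; apply/negP => /eqP xe.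
    have RE0 : Rintegral P E Y = 0.
      by move: xe; rewrite /x /condE_on -/pE => /(congr1 (fun z => z * pE)); rewrite mul0r divfK ?gt_eqF.
    case: up hH => hH.
      apply: (kill h 1) => //; first exact: bnd01.
        by move=> w /hH [_]; rewrite -/x -xe.
      rewrite -RIYh; apply/eqP; rewrite eq_le HY0 andbT -RE0.
      exact: RI_sub.
    apply: Hempty => w /hH [_]; rewrite -/x -xe => /lt_le_trans /(_ (proj1 (andP (h01 w)))).
    by rewrite ltxx.
  have RE1 : Rintegral P E Y = pE.
    by move: xe; rewrite /x /condE_on => /(congr1 (fun z => z * pE)); rewrite mul1r divfK ?gt_eqF.
  case: up hH => hH.
    apply: Hempty => w /hH [_]; rewrite -/x xe => /lt_le_trans /(_ (proj2 (andP (h01 w)))).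
    by rewrite ltxx.
  have m1Y : measurable_fun setT (fun w => 1 - Y w).
    by apply: measurable_funB => //; exact: measurable_cst.
  have Y01' w : 0 <= 1 - Y w <= 1.
    by have /andP[a b] := Y01 w; rewrite subr_ge0 b /= lerBlDr lerDl a.
  have RH1 : Rintegral P H (fun w => 1 - Y w) = 0.
    apply/eqP; rewrite eq_le; apply/andP; split.
      apply: le_trans (@RI_sub E H _ mE mH HE m1Y Y01') _.
      have eB : Rintegral P E (fun w => 1 - Y w) = Rintegral P E (fun _ => 1) - Rintegral P E Y.
        by apply: RintegralB; [exact: mE | exact: intc | exact: intY].
      have c1 : Rintegral P E (fun _ => 1) = 1 * pE by apply: RIc.
      by rewrite eB c1 RE1 mul1r subrr.
    by case/andP: (@RI_01 H _ mH m1Y Y01').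
  apply: (kill (fun w => 1 - h w) 1).
  - by apply: measurable_funB => //; exact: measurable_cst.
  - move=> w; have /andP[a b] := h01 w.
    by rewrite ger0_norm ?subr_ge0 // lerBlDr lerDl.
  - by move=> w /hH [_]; rewrite -/x xe subr_gt0.
  - have eB : Rintegral P H (fun w => 1 - h w) = Rintegral P H (fun _ => 1) - Rintegral P H h.
      by apply: RintegralB; [exact: mH | exact: intc | exact: inth].
    have eB' : Rintegral P H (fun w => 1 - Y w) = Rintegral P H (fun _ => 1) - Rintegral P H Y.
      by apply: RintegralB; [exact: mH | exact: intc | exact: intY].
    by rewrite eB -RIYh -eB'.
have x01' : 0 <= x <= 1 by case/andP: x01 => /ltW -> /ltW ->.
have mu01 : 0 <= mu1 <= 1.
  by rewrite /mu1 /condE_on divr_ge0 //= ler_pdivrMr // mul1r.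
have RIh : Rintegral P H h = mu1 * pH.
  by rewrite /mu1 /condE_on -RIYh divfK // gt_eqF.
have [w [Hw hw]] : exists w, H w /\ (if up then h w <= mu1 else mu1 <= h w).
  apply/not_existsP => nE.
  have nE' w : H w -> (if up then mu1 < h w else h w < mu1).
    move=> Hw; have := nE w; case: up {hH nE} => /not_andP [] // /negP;
    by rewrite -ltNge.
  case: up hH nE nE' => hH _ nE'.
    apply: (kill (fun w => h w - mu1) (1 + `|mu1|)).
    - by apply: measurable_funB => //; exact: measurable_cst.
    - by move=> w; apply: le_trans (ler_normB _ _) _; rewrite lerD2r bnd01.
    - by move=> w /nE'; rewrite subr_gt0.
    - have e : Rintegral P H (fun w => h w - mu1) = Rintegral P H h - mu1 * pH.
        by apply: RIfc => //; exact: inth.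
      by rewrite e RIh subrr.
  apply: (kill (fun w => mu1 - h w) (`|mu1| + 1)).
  - by apply: measurable_funB => //; exact: measurable_cst.
  - by move=> w; apply: le_trans (ler_normB _ _) _; rewrite lerD2l bnd01.
  - by move=> w /nE'; rewrite subr_gt0.
  - have e : Rintegral P H (fun w => mu1 - h w) = mu1 * pH - Rintegral P H h.
      by apply: RIcf => //; exact: inth.
    by rewrite e RIh subrr.
have Dmge : eps / 2 <= Dm.
  have [h1 h2] := hH w Hw.
  apply: le_trans h1 _; apply: DG_mono => //.
  move: hw h2; case: up {hH} => /= hw h2; first by rewrite (ltW h2) hw.
  by rewrite hw (ltW h2) orbT.
have Kle : K <= pH * (Dm + M).
  set A := G mu1 + M - G x + x * derive1 G x.
  set B := - derive1 G x.
  have : K <= Rintegral P H (fun w => A + B * h w).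
    apply: le_Rintegral => //; first exact: intDh.
      apply: (@intb _ _ (`|A| + `|B| * 1)).
      - done.
      - apply: measurable_funD; first exact: measurable_cst.
        by apply: measurable_funM => //; exact: measurable_cst.
      - move=> v; apply: le_trans (ler_normD _ _) _; rewrite lerD2l normrM.
        by rewrite ler_wpM2l // bnd01.
    move=> v _; rewrite /Dh /DG /A /B.
    have := Mb (h v) mu1 (h01 v) mu01; lra.
  have eI : Rintegral P H (fun w => A + B * h w) = A * pH + B * Rintegral P H h.
    rewrite RintegralD //.
    - congr (_ + _); first exact: RIc.
      by apply: RintegralZl => //; exact: inth.
    - exact: intc.
    - apply: (@intb _ _ (`|B| * 1)) => //.
        by apply: measurable_funM => //; exact: measurable_cst.
      by move=> v; rewrite normrM ler_wpM2l // bnd01.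
  rewrite eI RIh /A /B /Dm /DG => H1.
  apply: le_trans H1 _; rewrite le_eqVlt; apply/orP; left; apply/eqP; ring.
have q : (Dm + M) * eps <= Dm * (8 * M + 2 * eps) by nra.
apply: le_trans (_ : pH * (Dm + M) * eps <= _).
  by rewrite ler_wpM2r // ltW.
by rewrite -mulrA (mulrC Dm) -mulrA ler_wpM2l.
Qed.

End Meas.

Lemma meas_pre {R : realType} (d' : measure_display) (T : measurableType d') (g : T -> R) (i : interval R) :
  measurable_fun setT g -> measurable (g @^-1` [set` i]).
Proof. by move=> mg; rewrite -(setTI (g @^-1` _)); apply: mg => //; exact: measurable_itv. Qed.

Lemma measDG {R : realType} (G : R -> R) (d' : measure_display) (T : measurableType d') (f : T -> R) c :
  strictly_convex01 G -> differentiable01 G ->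
  measurable_fun setT f -> (forall s, 0 <= f s <= 1) ->
  measurable_fun setT (fun s => DG G (f s) c).
Proof.
move=> cG dG mf f01; rewrite /DG; apply: measurable_funB.
  apply: measurable_funB; [exact: measGf | exact: measurable_cst].
apply: measurable_funM; last exact: measurable_cst.
apply: measurable_funB => //; exact: measurable_cst.
Qed.

Lemma meas_msg {R : realType} (G : R -> R) (d' : measure_display) (T : measurableType d')
  eps up (A : set T) mu0 (f : T -> R) :
  strictly_convex01 G -> differentiable01 G ->
  measurable A -> measurable_fun setT f -> (forall s, 0 <= f s <= 1) ->
  measurable (msg_set G eps up A mu0 f).
Proof.
move=> cG dG mA mf f01.
have -> : msg_set G eps up A mu0 f = A `&` ((fun s => DG G (f s) mu0) @^-1` [set` `[eps / 2, +oo[])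
   `&` (f @^-1` [set` (if up then `]mu0, +oo[ else `]-oo, mu0[)]).
  apply/seteqP; split => s /=.
    by case=> [As [e1 e2]]; rewrite !in_itv /= e1; case: up e2 => /= ->.
  by rewrite !in_itv /= andbT => -[[As e1] e2]; split => //; split => //; case: up e2; rewrite /= ?andbT.
apply: measurableI; first apply: measurableI => //.
  by apply: meas_pre; exact: measDG.
exact: meas_pre.
Qed.

Theorem lemmaC2 (R : realType) (d d1 d2 : measure_display)
  (Omega : measurableType d) (P : probability Omega R)
  (SS : measurableType d1) (TT : measurableType d2)
  (sig : Omega -> SS) (tau : Omega -> TT) (Y : Omega -> R)
  (G : R -> R) (eps : R) (St : set SS) (Tt : set TT) :
  measurable_fun setT sig -> measurable_fun setT tau ->
  measurable_fun setT Y -> (forall w, 0 <= Y w <= 1) ->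
  strictly_convex01 G -> differentiable01 G -> bounded01 G ->
  0 < eps -> measurable St -> measurable Tt ->
  (0 < P (sig @^-1` St `&` tau @^-1` Tt))%E ->
  let E := sig @^-1` St `&` tau @^-1` Tt in
  let mu0 := condE_on P E Y in
  (* Alice speaks at turn t+1 *)
  (forall (f : SS -> R), cond_version P sig tau Tt Y f ->
   forall up : bool,
   let Snext := msg_set G eps up St mu0 f in
   let hi := sig @^-1` Snext `&` tau @^-1` Tt in
   let mu1 := condE_on P hi Y in
   let alpha := condE_on P E (fun w => DG G (f (sig w)) mu0 * \1_hi w) in
   condE_on P E (fun w => DG G mu1 mu0 * \1_hi w)
     >= alpha * eps / (8 * Mrange G + 2 * eps)) /\
  (* Bob speaks at turn t+1 *)
  (forall (g : TT -> R), cond_version P tau sig St Y g ->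
   forall up : bool,
   let Tnext := msg_set G eps up Tt mu0 g in
   let hi := sig @^-1` St `&` tau @^-1` Tnext in
   let mu1 := condE_on P hi Y in
   let alpha := condE_on P E (fun w => DG G (g (tau w)) mu0 * \1_hi w) in
   condE_on P E (fun w => DG G mu1 mu0 * \1_hi w)
     >= alpha * eps / (8 * Mrange G + 2 * eps)).
Proof.
move=> msig mtau mY Y01 cG dG bG e0 mSt mTt PE0 E mu0.
have mpre1 (A : set SS) : measurable A -> measurable (sig @^-1` A).
  by move=> mA; rewrite -(setTI (sig @^-1` _)); exact: msig.
have mpre2 (A : set TT) : measurable A -> measurable (tau @^-1` A).
  by move=> mA; rewrite -(setTI (tau @^-1` _)); exact: mtau.
have mE : measurable E by apply: measurableI; [exact: mpre1 | exact: mpre2].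
split.
- move=> f [mf [f01 cf]] up; cbv zeta.
  set Snext := msg_set G eps up St mu0 f.
  set hi := sig @^-1` Snext `&` tau @^-1` Tt.
  have mS : measurable Snext by exact: meas_msg.
  have mhi : measurable hi by apply: measurableI; [exact: mpre1 | exact: mpre2].
  apply: (@core R d Omega P G eps E hi Y (fun w => f (sig w)) up) => //.
  - by move=> w [[Sw _] Tw]; split.
  - exact: measurableT_comp.
  - exact: cf.
  - by move=> w [[_ [e1 e2]] _]; split.
- move=> g [mg [g01 cg]] up; cbv zeta.
  set Tnext := msg_set G eps up Tt mu0 g.
  set hi := sig @^-1` St `&` tau @^-1` Tnext.
  have mT : measurable Tnext by exact: meas_msg.
  have mhi : measurable hi by apply: measurableI; [exact: mpre1 | exact: mpre2].
  apply: (@core R d Omega P G eps E hi Y (fun w => g (tau w)) up) => //.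
  - by move=> w [Sw [Tw _]]; split.
  - exact: measurableT_comp.
  - by rewrite /hi setIC; exact: cg.
  - by move=> w [_ [_ [e1 e2]]]; split.
Qed.
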